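(* Let $\phi$ be a formula well-formed in $\Sigma$ and $a,b$ terms of a common name type well-typed in $\Sigma$. In the sequent calculus $NL^{\Rightarrow}$: if $\Sigma;\Gamma,(a\;b)\cdot\phi\Rightarrow\Delta$ is derivable, then $\Sigma;\Gamma,\phi\Rightarrow\Delta$ has a derivation of the same logical height; and if $\Sigma;\Gamma\Rightarrow(a\;b)\cdot\phi,\Delta$ is derivable, then $\Sigma;\Gamma\Rightarrow\phi,\Delta$ has a derivation of the same logical height.
   Context: Types $\tau ::= \delta \mid \nu \mid \langle\nu\rangle\tau$ ($\delta$ data types, $\nu$ name types). Terms $t ::= x \mid \mathsf{a} \mid c \mid f(\vec t)$ over variables $x$ and a disjoint countably infinite set of name-symbols $\mathsf a$; the signature contains, for all $\nu,\tau$, swapping $(a\;b)\cdot t$, abstraction $\langle a\rangle t$, equality $t\approx u$, freshness $a\#t$, besides constants $c$, function symbols $f$, relation symbols $p$. Formulas: $\top,\bot$, atoms, $\wedge,\vee,\supset,\forall x{:}\tau,\exists x{:}\tau$, and $\mathsf N\mathsf a{:}\nu.\phi$ (binding the name-symbol $\mathsf a$). Swapping on formulas: $(a\;b)\cdot\top=\top$, $(a\;b)\cdot\bot=\bot$, $(a\;b)\cdot p(\vec t)=p((a\;b)\cdot\vec t)$, commuting with $\wedge,\vee,\supset$, with $\forall x,\exists x$ (for $x$ not free in $a,b$) and with $\mathsf N\mathsf a$ (for $\mathsf a$ not occurring in $a,b$). Contexts $\Sigma::=\cdot\mid\Sigma,x{:}\tau\mid\Sigma\#\mathsf a{:}\nu$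 (no symbol twice; $\Sigma\#\mathsf a{:}\nu$ means $\mathsf a$ is fresh for everything in $\Sigma$); $Tm_\Sigma$ = terms well-typed in $\Sigma$; $|\cdot|=\emptyset$, $|\Sigma,x{:}\tau|=|\Sigma|$, $|\Sigma\#\mathsf a{:}\nu|=|\Sigma|\cup\{\mathsf a\#t\mid t\in Tm_\Sigma\}$. Rules of $NL^{\Rightarrow}$ for $\Sigma;\Gamma\Rightarrow\Delta$: (i) classical G3c rules: initial sequents $\Sigma;\Gamma,P\Rightarrow P,\Delta$ ($P$ atomic), $\top R$, $\bot L$, context-sharing left/right rules for $\wedge,\vee,\supset,\forall,\exists$; (ii) $\mathsf N R$: from $\Sigma\#\mathsf a{:}\nu;\Gamma\Rightarrow\phi,\Delta$ infer $\Sigma;\Gamma\Rightarrow\mathsf N\mathsf a{:}\nu.\phi,\Delta$; $\mathsf N L$: from $\Sigma\#\mathsf a{:}\nu;\Gamma,\phi\Rightarrow\Delta$ infer $\Sigma;\Gamma,\mathsf N\mathsf a{:}\nu.\phi\Rightarrow\Delta$ ($\mathsf a\notin\Sigma$); (iii) nonlogical rules: $\approx R$: from $\Sigma;\Gamma,t\approx t\Rightarrow\Delta$ infer $\Sigma;\Gamma\Rightarrow\Delta$; $\approx S$: from $\Sigma;\Gamma,t\approx u,P(t),P(u)\Rightarrow\Delta$ infer $\Sigma;\Gamma,t\approx u,P(t)\Rightarrow\Delta$; for each instance $\bigwedge_j P_j\supset\bigvee_{i\le m}Q_i$ of (S1) $(a\;a)\cdot x\approx x$, (S2) $(a\;b)\cdot(a\;b)\cdot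 x\approx x$, (S3) $(a\;b)\cdot a\approx b$, (E1) $(a\;b)\cdot c\approx c$, (E2) $(a\;b)\cdot f(\vec t)\approx f((a\;b)\cdot\vec t)$, (E3) $p(\vec t)\supset p((a\;b)\cdot\vec t)$, (F1) $a\#x\wedge b\#x\supset(a\;b)\cdot x\approx x$, (F2) $a\#b$ ($a,b$ of distinct name types), (F3) $a\#a\supset\bot$, (F4) $a\#b\vee a\approx b$, (A1) $a\#y\wedge x\approx(a\;b)\cdot y\supset\langle a\rangle x\approx\langle b\rangle y$ (arbitrary well-typed terms), the rule: from $\Sigma;\Gamma,\vec P,Q_i\Rightarrow\Delta$ for all $i$ infer $\Sigma;\Gamma,\vec P\Rightarrow\Delta$; (A2) from $\Sigma;\Gamma,E,a\approx b,t\approx u\Rightarrow\Delta$ and $\Sigma;\Gamma,E,a\#u,t\approx(a\;b)\cdot u\Rightarrow\Delta$ infer $\Sigma;\Gamma,E\Rightarrow\Delta$, $E$ being $\langle a\rangle t\approx\langle b\rangle u$; (A3) from $\Sigma\vdash t:\langle\nu\rangle\sigma$ and $\Sigma,a{:}\nu,x{:}\sigma;\Gamma,t\approx\langle a\rangle x\Rightarrow\Delta$ ($a,x\notin\Sigma$) infer $\Sigma;\Gamma\Rightarrow\Delta$; (F) from $\Sigma\#\mathsf a{:}\nu;\Gamma\Rightarrow\Delta$ ($\mathsf a\notin\Sigma$) infer $\Sigma;\Gamma\Rightarrow\Delta$; ($\Sigma\#$) from $\Sigma;\Gamma,\mathsf a\#t\Rightarrow\Delta$ with $\mathsf a\#t\in|\Sigma|$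 infer $\Sigma;\Gamma\Rightarrow\Delta$. The rules in (i) and (ii) are the logical rules; the logical height of a derivation is the maximum number of logical rules on any branch. *)

(* Defs.v *)
(* Syntax and sequent calculus NL^=> of nominal logic,
   in locally-nameless style (bound variables / bound name-symbols are
   de Bruijn indices, free ones are named by nat). *)
From Stdlib Require Import List Permutation Arith.
Import ListNotations.
Set Implicit Arguments.

(** Types  tau ::= delta | nu | <nu>tau  (data/name types indexed by nat) *)
Inductive ty : Type :=
| TData (d : nat)
| TName (nu : nat)
| TAbs (nu : nat) (t : ty).

(** A signature: constants, function symbols and relation symbols with types.
    Swapping, abstraction, equality and freshness are built in. *)
Record signature : Type := {
  Con : Type; Fun : Type; Rel : Type;
  con_ty : Con -> ty;
  fun_ty : Fun -> list ty * ty;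
  rel_ty : Rel -> list ty }.

Section Syntax.
Variable Sg : signature.

Inductive tm : Type :=
| tfv (x : nat)
| tbv (i : nat)
| tfn (a : nat)
| tbn (i : nat)
| tcon (c : Con Sg)
| tapp (f : Fun Sg) (ts : list tm)
| tswap (a b t : tm)
| tabs (a t : tm).

Inductive fm : Type :=
| fTop | fBot
| fPred (p : Rel Sg) (ts : list tm)
| fEq (t u : tm)
| fFresh (a t : tm)
| fAnd (A B : fm) | fOr (A B : fm) | fImp (A B : fm)
| fAll (tau : ty) (A : fm)  (* binds variable index 0 *)
| fEx (tau : ty) (A : fm)
| fNew (nu : nat) (A : fm). (* binds name-symbol index 0 *)

Definition is_atom (A : fm) : Prop :=
  match A with fPred _ _ | fEq _ _ | fFresh _ _ => True | _ => False end.

(** Contexts; the head of the list is the most recent entry. *)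
Inductive centry : Type :=
| CVar (x : nat) (tau : ty)
| CName (a : nat) (nu : nat).
Definition ctx := list centry.

Fixpoint ctx_vars (G : ctx) : list nat :=
  match G with [] => [] | CVar x _ :: G' => x :: ctx_vars G' | CName _ _ :: G' => ctx_vars G' end.
Fixpoint ctx_names (G : ctx) : list nat :=
  match G with [] => [] | CName a _ :: G' => a :: ctx_names G' | CVar _ _ :: G' => ctx_names G' end.

Definition ctx_ok (G : ctx) : Prop := NoDup (ctx_vars G) /\ NoDup (ctx_names G).

Inductive has_ty (G : ctx) : tm -> ty -> Prop :=
| ty_var x tau : In (CVar x tau) G -> has_ty G (tfv x) tau
| ty_name a nu : In (CName a nu) G -> has_ty G (tfn a) (TName nu)
| ty_con c : has_ty G (tcon c) (con_ty Sg c)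
| ty_app f ts : Forall2 (has_ty G) ts (fst (fun_ty Sg f)) -> has_ty G (tapp f ts) (snd (fun_ty Sg f))
| ty_swap a b t nu tau : has_ty G a (TName nu) -> has_ty G b (TName nu) -> has_ty G t tau ->
    has_ty G (tswap a b t) tau
| ty_abs a t nu tau : has_ty G a (TName nu) -> has_ty G t tau -> has_ty G (tabs a t) (TAbs nu tau).

Fixpoint open_tm (k : nat) (u : tm) (t : tm) : tm :=
  match t with
  | tbv i => if Nat.eqb i k then u else t
  | tapp f ts => tapp f (map (open_tm k u) ts)
  | tswap a b t' => tswap (open_tm k u a) (open_tm k u b) (open_tm k u t')
  | tabs a t' => tabs (open_tm k u a) (open_tm k u t')
  | _ => t
  end.
Fixpoint open_ntm (k : nat) (n : nat) (t : tm) : tm :=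
  match t with
  | tbn i => if Nat.eqb i k then tfn n else t
  | tapp f ts => tapp f (map (open_ntm k n) ts)
  | tswap a b t' => tswap (open_ntm k n a) (open_ntm k n b) (open_ntm k n t')
  | tabs a t' => tabs (open_ntm k n a) (open_ntm k n t')
  | _ => t
  end.
Fixpoint subst_tm (z : nat) (u : tm) (t : tm) : tm :=
  match t with
  | tfv x => if Nat.eqb x z then u else t
  | tapp f ts => tapp f (map (subst_tm z u) ts)
  | tswap a b t' => tswap (subst_tm z u a) (subst_tm z u b) (subst_tm z u t')
  | tabs a t' => tabs (subst_tm z u a) (subst_tm z u t')
  | _ => t
  end.

Fixpoint map_atoms (g : tm -> tm) (A : fm) : fm :=
  match A with
  | fTop => fTop | fBot => fBot
  | fPred p ts => fPred p (map g ts)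
  | fEq t u => fEq (g t) (g u)
  | fFresh a t => fFresh (g a) (g t)
  | fAnd A B => fAnd (map_atoms g A) (map_atoms g B)
  | fOr A B => fOr (map_atoms g A) (map_atoms g B)
  | fImp A B => fImp (map_atoms g A) (map_atoms g B)
  | fAll tau A => fAll tau (map_atoms g A)
  | fEx tau A => fEx tau (map_atoms g A)
  | fNew nu A => fNew nu (map_atoms g A)
  end.

Fixpoint open_fm (k : nat) (u : tm) (A : fm) : fm :=
  match A with
  | fTop => fTop | fBot => fBot
  | fPred p ts => fPred p (map (open_tm k u) ts)
  | fEq t v => fEq (open_tm k u t) (open_tm k u v)
  | fFresh a t => fFresh (open_tm k u a) (open_tm k u t)
  | fAnd A B => fAnd (open_fm k u A) (open_fm k u B)
  | fOr A B => fOr (open_fm k u A) (open_fm k u B)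
  | fImp A B => fImp (open_fm k u A) (open_fm k u B)
  | fAll tau A => fAll tau (open_fm (S k) u A)
  | fEx tau A => fEx tau (open_fm (S k) u A)
  | fNew nu A => fNew nu (open_fm k u A)
  end.
Fixpoint open_nfm (k : nat) (n : nat) (A : fm) : fm :=
  match A with
  | fTop => fTop | fBot => fBot
  | fPred p ts => fPred p (map (open_ntm k n) ts)
  | fEq t v => fEq (open_ntm k n t) (open_ntm k n v)
  | fFresh a t => fFresh (open_ntm k n a) (open_ntm k n t)
  | fAnd A B => fAnd (open_nfm k n A) (open_nfm k n B)
  | fOr A B => fOr (open_nfm k n A) (open_nfm k n B)
  | fImp A B => fImp (open_nfm k n A) (open_nfm k n B)
  | fAll tau A => fAll tau (open_nfm k n A)
  | fEx tau A => fEx tau (open_nfm k n A)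
  | fNew nu A => fNew nu (open_nfm (S k) n A)
  end.

(** Swapping on formulas: (a b).phi.  Since a, b are well-typed (hence
    closed) terms, swapping commutes with all binders without capture. *)
Definition swap_fm (a b : tm) (A : fm) : fm := map_atoms (tswap a b) A.

Fixpoint fv_tm (t : tm) : list nat :=
  match t with
  | tfv x => [x]
  | tapp _ ts => flat_map fv_tm ts
  | tswap a b t' => fv_tm a ++ fv_tm b ++ fv_tm t'
  | tabs a t' => fv_tm a ++ fv_tm t'
  | _ => []
  end.
Fixpoint fn_tm (t : tm) : list nat :=
  match t with
  | tfn a => [a]
  | tapp _ ts => flat_map fn_tm ts
  | tswap a b t' => fn_tm a ++ fn_tm b ++ fn_tm t'
  | tabs a t' => fn_tm a ++ fn_tm t'
  | _ => []
  end.
Fixpoint syms_fm (g : tm -> list nat) (A : fm) : list nat :=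
  match A with
  | fTop | fBot => []
  | fPred _ ts => flat_map g ts
  | fEq t u => g t ++ g u
  | fFresh a t => g a ++ g t
  | fAnd A B | fOr A B | fImp A B => syms_fm g A ++ syms_fm g B
  | fAll _ A | fEx _ A | fNew _ A => syms_fm g A
  end.
Definition fv_fm := syms_fm fv_tm.
Definition fn_fm := syms_fm fn_tm.

Definition fresh_var (y : nat) (G : ctx) (Gam Del : list fm) : Prop :=
  ~ In y (ctx_vars G) /\ (forall A, In A Gam \/ In A Del -> ~ In y (fv_fm A)).
Definition fresh_name (a : nat) (G : ctx) (Gam Del : list fm) : Prop :=
  ~ In a (ctx_names G) /\ (forall A, In A Gam \/ In A Del -> ~ In a (fn_fm A)).

Inductive wf_fm : ctx -> fm -> Prop :=
| wf_top G : wf_fm G fTop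
| wf_bot G : wf_fm G fBot
| wf_pred G p ts : Forall2 (has_ty G) ts (rel_ty Sg p) -> wf_fm G (fPred p ts)
| wf_eq G t u tau : has_ty G t tau -> has_ty G u tau -> wf_fm G (fEq t u)
| wf_fresh G a t nu tau : has_ty G a (TName nu) -> has_ty G t tau -> wf_fm G (fFresh a t)
| wf_and G A B : wf_fm G A -> wf_fm G B -> wf_fm G (fAnd A B)
| wf_or G A B : wf_fm G A -> wf_fm G B -> wf_fm G (fOr A B)
| wf_imp G A B : wf_fm G A -> wf_fm G B -> wf_fm G (fImp A B)
| wf_all G tau A : (forall x, ~ In x (ctx_vars G) -> wf_fm (CVar x tau :: G) (open_fm 0 (tfv x) A)) ->
    wf_fm G (fAll tau A)
| wf_ex G tau A : (forall x, ~ In x (ctx_vars G) -> wf_fm (CVar x tau :: G) (open_fm 0 (tfv x) A)) ->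
    wf_fm G (fEx tau A)
| wf_new G nu A : (forall a, ~ In a (ctx_names G) -> wf_fm (CName a nu :: G) (open_nfm 0 a A)) ->
    wf_fm G (fNew nu A).

(** |Sigma| : the freshness facts a # t, for Sigma # a:nu and t in Tm of the prefix. *)
Fixpoint in_bar (G : ctx) (P : fm) : Prop :=
  match G with
  | [] => False
  | CVar _ _ :: G' => in_bar G' P
  | CName a _ :: G' => (exists t tau, has_ty G' t tau /\ P = fFresh (tfn a) t) \/ in_bar G' P
  end.

(** Instances  /\ Ps  ->  \/_i (/\ Qs_i)  of the nonlogical axioms; the rule
    is: from  Gamma, Ps, Qs_i => Delta  for all i, infer  Gamma, Ps => Delta.
    (A2 is also expressed in this format, with two conjunctive disjuncts.) *)
Inductive ax_instance (G : ctx) : list fm -> list (list fm) -> Prop :=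
| ax_S1 a nu x tau : has_ty G a (TName nu) -> has_ty G x tau ->
    ax_instance G [] [[fEq (tswap a a x) x]]
| ax_S2 a b nu x tau : has_ty G a (TName nu) -> has_ty G b (TName nu) -> has_ty G x tau ->
    ax_instance G [] [[fEq (tswap a b (tswap a b x)) x]]
| ax_S3 a b nu : has_ty G a (TName nu) -> has_ty G b (TName nu) ->
    ax_instance G [] [[fEq (tswap a b a) b]]
| ax_E1 a b nu c : has_ty G a (TName nu) -> has_ty G b (TName nu) ->
    ax_instance G [] [[fEq (tswap a b (tcon c)) (tcon c)]]
| ax_E2 a b nu f ts tau : has_ty G a (TName nu) -> has_ty G b (TName nu) ->
    has_ty G (tapp f ts) tau ->
    ax_instance G [] [[fEq (tswap a b (tapp f ts)) (tapp f (map (tswap a b) ts))]]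
| ax_E2_swap a b nu c d t tau : has_ty G a (TName nu) -> has_ty G b (TName nu) ->
    has_ty G (tswap c d t) tau ->
    ax_instance G [] [[fEq (tswap a b (tswap c d t))
                           (tswap (tswap a b c) (tswap a b d) (tswap a b t))]]
| ax_E2_abs a b nu c t tau : has_ty G a (TName nu) -> has_ty G b (TName nu) ->
    has_ty G (tabs c t) tau ->
    ax_instance G [] [[fEq (tswap a b (tabs c t)) (tabs (tswap a b c) (tswap a b t))]]
| ax_E3 a b nu P : has_ty G a (TName nu) -> has_ty G b (TName nu) ->
    is_atom P -> wf_fm G P ->
    ax_instance G [P] [[swap_fm a b P]]
| ax_F1 a b nu x tau : has_ty G a (TName nu) -> has_ty G b (TName nu) -> has_ty G x tau ->
    ax_instance G [fFresh a x; fFresh b x] [[fEq (tswap a b x) x]]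
| ax_F2 a b nu nu' : nu <> nu' -> has_ty G a (TName nu) -> has_ty G b (TName nu') ->
    ax_instance G [] [[fFresh a b]]
| ax_F3 a nu : has_ty G a (TName nu) ->
    ax_instance G [fFresh a a] []
| ax_F4 a b nu : has_ty G a (TName nu) -> has_ty G b (TName nu) ->
    ax_instance G [] [[fFresh a b]; [fEq a b]]
| ax_A1 a b nu x y tau : has_ty G a (TName nu) -> has_ty G b (TName nu) ->
    has_ty G x tau -> has_ty G y tau ->
    ax_instance G [fFresh a y; fEq x (tswap a b y)] [[fEq (tabs a x) (tabs b y)]]
| ax_A2 a b t u :
    ax_instance G [fEq (tabs a t) (tabs b u)]
                  [[fEq a b; fEq t u]; [fFresh a u; fEq t (tswap a b u)]].

(** der G Gam Del n :  G; Gam => Del  has a derivation of logical height <= n.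
    Gam, Del are multisets (lists up to permutation). Logical rules (G3c
    rules and N-rules) increase the height; nonlogical rules do not. *)
Inductive der : ctx -> list fm -> list fm -> nat -> Prop :=
| d_init G Gam Del P n : is_atom P -> In P Gam -> In P Del -> der G Gam Del n
| d_topR G Gam Del n : In fTop Del -> der G Gam Del n
| d_botL G Gam Del n : In fBot Gam -> der G Gam Del n
| d_andL G Gam Gam' Del A B n : Permutation Gam (fAnd A B :: Gam') ->
    der G (A :: B :: Gam') Del n -> der G Gam Del (S n)
| d_andR G Gam Del Del' A B n : Permutation Del (fAnd A B :: Del') ->
    der G Gam (A :: Del') n -> der G Gam (B :: Del') n -> der G Gam Del (S n)
| d_orL G Gam Gam' Del A B n : Permutation Gam (fOr A B :: Gam') ->
    der G (A :: Gam') Del n -> der G (B :: Gam') Del n -> der G Gam Del (S n)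
| d_orR G Gam Del Del' A B n : Permutation Del (fOr A B :: Del') ->
    der G Gam (A :: B :: Del') n -> der G Gam Del (S n)
| d_impL G Gam Gam' Del A B n : Permutation Gam (fImp A B :: Gam') ->
    der G Gam' (A :: Del) n -> der G (B :: Gam') Del n -> der G Gam Del (S n)
| d_impR G Gam Del Del' A B n : Permutation Del (fImp A B :: Del') ->
    der G (A :: Gam) (B :: Del') n -> der G Gam Del (S n)
| d_allL G Gam Gam' Del tau A t n : Permutation Gam (fAll tau A :: Gam') ->
    has_ty G t tau ->
    der G (open_fm 0 t A :: fAll tau A :: Gam') Del n -> der G Gam Del (S n)
| d_allR G Gam Del Del' tau A y n : Permutation Del (fAll tau A :: Del') ->
    fresh_var y G Gam Del ->
    der (CVar y tau :: G) Gam (open_fm 0 (tfv y) A :: Del') n -> der G Gam Del (S n)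
| d_exL G Gam Gam' Del tau A y n : Permutation Gam (fEx tau A :: Gam') ->
    fresh_var y G Gam Del ->
    der (CVar y tau :: G) (open_fm 0 (tfv y) A :: Gam') Del n -> der G Gam Del (S n)
| d_exR G Gam Del Del' tau A t n : Permutation Del (fEx tau A :: Del') ->
    has_ty G t tau ->
    der G Gam (open_fm 0 t A :: fEx tau A :: Del') n -> der G Gam Del (S n)
| d_newR G Gam Del Del' nu A a n : Permutation Del (fNew nu A :: Del') ->
    fresh_name a G Gam Del ->
    der (CName a nu :: G) Gam (open_nfm 0 a A :: Del') n -> der G Gam Del (S n)
| d_newL G Gam Gam' Del nu A a n : Permutation Gam (fNew nu A :: Gam') ->
    fresh_name a G Gam Del ->
    der (CName a nu :: G) (open_nfm 0 a A :: Gam') Del n -> der G Gam Del (S n)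
| d_eqR G Gam Del t tau n : has_ty G t tau ->
    der G (fEq t t :: Gam) Del n -> der G Gam Del n
| d_eqS G Gam Gam' Del Q z t u n : is_atom Q ->
    Permutation Gam (fEq t u :: map_atoms (subst_tm z t) Q :: Gam') ->
    der G (map_atoms (subst_tm z u) Q :: Gam) Del n -> der G Gam Del n
| d_ax G Gam Gam' Del Ps Qss n : ax_instance G Ps Qss ->
    Permutation Gam (Ps ++ Gam') ->
    (forall Qs, In Qs Qss -> der G (Qs ++ Gam) Del n) -> der G Gam Del n
| d_A3 G Gam Del t nu sigma a x n : has_ty G t (TAbs nu sigma) -> a <> x ->
    fresh_var a G Gam Del -> fresh_var x G Gam Del ->
    der (CVar x sigma :: CVar a (TName nu) :: G) (fEq t (tabs (tfv a) (tfv x)) :: Gam) Del n ->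
    der G Gam Del n
| d_F G Gam Del a nu n : fresh_name a G Gam Del ->
    der (CName a nu :: G) Gam Del n -> der G Gam Del n
| d_bar G Gam Del P n : in_bar G P ->
    der G (P :: Gam) Del n -> der G Gam Del n.

End Syntax.

(* Main.v *)
Require Import Defs.
From Stdlib Require Import List Permutation Arith Lia.
Import ListNotations.
Unset Implicit Arguments.
#[local] Arguments tfv {Sg} x.
#[local] Arguments tbv {Sg} i.
#[local] Arguments tfn {Sg} a.
#[local] Arguments tbn {Sg} i.
#[local] Arguments fTop {Sg}.
#[local] Arguments tcon {Sg} c.
#[local] Arguments fBot {Sg}.

Section Terms.
Variable Sg : signature.
Notation tm := (tm Sg).
Notation fm := (fm Sg).

Section TmInd.
Variable P : tm -> Prop.
Hypothesis Hfv : forall x, P (tfv x).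
Hypothesis Hbv : forall x, P (tbv x).
Hypothesis Hfn : forall x, P (tfn x).
Hypothesis Hbn : forall x, P (tbn x).
Hypothesis Hcon : forall c, P (tcon c).
Hypothesis Happ : forall f ts, Forall P ts -> P (tapp f ts).
Hypothesis Hswap : forall a b t, P a -> P b -> P t -> P (tswap a b t).
Hypothesis Habs : forall a t, P a -> P t -> P (tabs a t).
Fixpoint tm_ind2 (t : tm) : P t :=
  match t with
  | tfv x => Hfv x | tbv x => Hbv x | tfn x => Hfn x | tbn x => Hbn x
  | tcon c => Hcon c
  | tapp f ts => Happ f ts ((fix go l : Forall P l :=
       match l with nil => Forall_nil _ | cons x l' => Forall_cons _ (tm_ind2 x) (go l') end) ts)
  | tswap a b t => Hswap _ _ _ (tm_ind2 a) (tm_ind2 b) (tm_ind2 t)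
  | tabs a t => Habs _ _ (tm_ind2 a) (tm_ind2 t)
  end.
End TmInd.

Section TyInd.
Variable P : ctx -> tm -> ty -> Prop.
Hypothesis Hvar : forall G x tau, In (CVar x tau) G -> P G (tfv x) tau.
Hypothesis Hname : forall G a nu, In (CName a nu) G -> P G (tfn a) (TName nu).
Hypothesis Hcon : forall G c, P G (tcon c) (con_ty Sg c).
Hypothesis Happ : forall G f ts, Forall2 (has_ty G) ts (fst (fun_ty Sg f)) ->
   Forall2 (P G) ts (fst (fun_ty Sg f)) -> P G (tapp f ts) (snd (fun_ty Sg f)).
Hypothesis Hswap : forall G a b t nu tau, has_ty G a (TName nu) -> P G a (TName nu) ->
  has_ty G b (TName nu) -> P G b (TName nu) -> has_ty G t tau -> P G t tau -> P G (tswap a b t) tau.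
Hypothesis Habs : forall G a t nu tau, has_ty G a (TName nu) -> P G a (TName nu) ->
  has_ty G t tau -> P G t tau -> P G (tabs a t) (TAbs nu tau).
Fixpoint has_ty_ind2 G t tau (H : has_ty G t tau) : P G t tau :=
  match H with
  | @ty_var _ _ x tau h => Hvar _ _ _ h
  | @ty_name _ _ a nu h => Hname _ _ _ h
  | @ty_con _ _ c => Hcon _ c
  | @ty_app _ _ f ts hs => Happ _ _ _ hs ((fix go l l' (h : Forall2 (has_ty G) l l') : Forall2 (P G) l l' :=
       match h with Forall2_nil _ => Forall2_nil _
       | @Forall2_cons _ _ _ _ _ _ _ h1 h2 => Forall2_cons _ _ (has_ty_ind2 _ _ _ h1) (go _ _ h2) end) _ _ hs)
  | @ty_swap _ _ _ _ _ _ _ h1 h2 h3 => Hswap _ _ _ _ _ _ h1 (has_ty_ind2 _ _ _ h1) h2 (has_ty_ind2 _ _ _ h2) h3 (has_ty_ind2 _ _ _ h3)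
  | @ty_abs _ _ _ _ _ _ h1 h2 => Habs _ _ _ _ _ h1 (has_ty_ind2 _ _ _ h1) h2 (has_ty_ind2 _ _ _ h2)
  end.
End TyInd.


Definition lcT (t : tm) := (forall k u, open_tm k u t = t) /\ (forall k c, open_ntm k c t = t).

Lemma map_id_Forall (f : tm -> tm) l : Forall (fun x => f x = x) l -> map f l = l.
Proof. induction 1; simpl; f_equal; auto. Qed.

Lemma map_ext_Forall (f g : tm -> tm) l : Forall (fun x => f x = g x) l -> map f l = map g l.
Proof. induction 1; simpl; f_equal; auto. Qed.

Lemma Forall2_Forall_l {A B} (P: A -> Prop) (R : A -> B -> Prop) l l' :
  Forall2 R l l' -> (forall x y, R x y -> P x) -> Forall P l.
Proof. induction 1; constructor; eauto. Qed.

Lemma has_ty_lc G t tau : has_ty G t tau -> lcT t.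
Proof.
  intros HH. refine (has_ty_ind2 (fun G t tau => lcT t) _ _ _ _ _ _ G t tau HH); clear;
  unfold lcT in *; simpl; intros; try (split; reflexivity).
  - assert (Forall lcT ts) as HF by (apply (Forall2_Forall_l _ _ _ _ H0); auto).
    split; intros; f_equal; apply map_id_Forall; eapply Forall_impl; try apply HF;
      intros x [Hx1 Hx2]; auto.
  - destruct H0, H2, H4; split; intros; f_equal; auto.
  - destruct H0, H2; split; intros; f_equal; auto.
Qed.

Fixpoint msubst_tm (f : nat -> tm) (t : tm) : tm :=
  match t with
  | tfv x => f x
  | tapp g ts => tapp g (map (msubst_tm f) ts)
  | tswap a b t' => tswap (msubst_tm f a) (msubst_tm f b) (msubst_tm f t')
  | tabs a t' => tabs (msubst_tm f a) (msubst_tm f t')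
  | _ => t
  end.

Lemma has_ty_msubst G1 G f s sg : has_ty G1 s sg ->
  (forall x tau, In (CVar x tau) G1 -> has_ty G (f x) tau) ->
  (forall c nu, In (CName c nu) G1 -> In (CName c nu) G) ->
  has_ty G (msubst_tm f s) sg.
Proof.
  intros HH. revert G f.
  refine (has_ty_ind2 (fun G1 s sg => forall G f,
    (forall x tau, In (CVar x tau) G1 -> has_ty G (f x) tau) ->
    (forall c nu, In (CName c nu) G1 -> In (CName c nu) G) ->
    has_ty G (msubst_tm f s) sg) _ _ _ _ _ _ G1 s sg HH); clear; simpl; intros.
  - auto.
  - apply ty_name; auto.
  - apply ty_con.
  - apply ty_app. clear H. induction H0; simpl; constructor; auto.
  - eapply ty_swap; eauto.
  - eapply ty_abs; eauto.
Qed.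

Lemma msubst_id t : msubst_tm (@tfv Sg) t = t.
Proof.
  induction t using tm_ind2; simpl; f_equal; auto.
  apply map_id_Forall; auto.
Qed.

Lemma has_ty_mono G1 G (s : tm) sg : has_ty G1 s sg -> incl G1 G -> has_ty G s sg.
Proof.
  intros H Hi. rewrite <- (msubst_id s). eapply has_ty_msubst; eauto.
  intros. constructor. auto.
Qed.

Lemma msubst_open f k u s : (forall y, lcT (f y)) ->
  msubst_tm f (open_tm k u s) = open_tm k (msubst_tm f u) (msubst_tm f s).
Proof.
  intros Hf; induction s using tm_ind2; simpl; auto.
  - destruct (Hf x) as [H1 _]; rewrite H1; auto.
  - destruct (Nat.eqb x k); auto.
  - f_equal. rewrite !map_map. apply map_ext_Forall; auto.
  - f_equal; auto.
  - f_equal; auto.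
Qed.

Lemma msubst_open_n f k c s : (forall y, lcT (f y)) ->
  msubst_tm f (open_ntm k c s) = open_ntm k c (msubst_tm f s).
Proof.
  intros Hf; induction s using tm_ind2; simpl; auto.
  - destruct (Hf x) as [_ H1]; rewrite H1; auto.
  - destruct (Nat.eqb x k); auto.
  - f_equal. rewrite !map_map. apply map_ext_Forall; auto.
  - f_equal; auto.
  - f_equal; auto.
Qed.

Definition upd (f : nat -> tm) x t := fun y => if Nat.eqb y x then t else f y.

Lemma msubst_upd f x t s : ~ In x (fv_tm s) -> msubst_tm (upd f x t) s = msubst_tm f s.
Proof.
  induction s using tm_ind2; simpl; intros Hn; auto.
  - unfold upd. destruct (Nat.eqb_spec x0 x); subst; auto. exfalso; auto.
  - f_equal. apply map_ext_Forall. induction H; constructor; simpl in Hn.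
    + apply H. intro; apply Hn; apply in_or_app; left; auto.
    + apply IHForall. intro; apply Hn; apply in_or_app; right; auto.
  - rewrite !in_app_iff in Hn. f_equal; match goal with H: _ -> ?g |- ?g => apply H; tauto end.
  - rewrite !in_app_iff in Hn. f_equal; match goal with H: _ -> ?g |- ?g => apply H; tauto end.
Qed.

Lemma subst_fresh z (u : tm) s : ~ In z (fv_tm s) -> subst_tm z u s = s.
Proof.
  induction s using tm_ind2; simpl; intros Hn; auto.
  - destruct (Nat.eqb_spec x z); subst; auto. exfalso; auto.
  - f_equal. apply map_id_Forall. induction H; constructor; simpl in Hn.
    + apply H. intro; apply Hn; apply in_or_app; left; auto.
    + apply IHForall. intro; apply Hn; apply in_or_app; right; auto.
  - rewrite !in_app_iff in Hn. f_equal; match goal with H: _ -> ?g |- ?g => apply H; tauto end.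
  - rewrite !in_app_iff in Hn. f_equal; match goal with H: _ -> ?g |- ?g => apply H; tauto end.
Qed.

Lemma in_ctx_vars x tau G : In (CVar x tau) G -> In x (ctx_vars G).
Proof. induction G as [|[y s|y s] G IH]; simpl; intros H; [contradiction| |]; destruct H as [H|H];
  try (inversion H; subst); auto. Qed.
Lemma in_ctx_names x nu G : In (CName x nu) G -> In x (ctx_names G).
Proof. induction G as [|[y s|y s] G IH]; simpl; intros H; [contradiction| |]; destruct H as [H|H];
  try (inversion H; subst); auto. Qed.

Lemma has_ty_syms G (t : tm) tau : has_ty G t tau ->
  incl (fv_tm t) (ctx_vars G) /\ incl (fn_tm t) (ctx_names G).
Proof.
  intros HH.
  refine (has_ty_ind2 (fun G t tau => incl (fv_tm t) (ctx_vars G) /\ incl (fn_tm t) (ctx_names G))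
     _ _ _ _ _ _ G t tau HH); clear; simpl; intros; split; intros y Hy; simpl in Hy;
    try (destruct Hy as [<-|[]]; eauto using in_ctx_vars, in_ctx_names); try contradiction.
  - apply in_flat_map in Hy as [s [Hs Hy]].
    clear H. induction H0; simpl in Hs; [contradiction|]. destruct Hs as [<-|Hs]; auto.
    apply H; auto.
  - apply in_flat_map in Hy as [s [Hs Hy]].
    clear H. induction H0; simpl in Hs; [contradiction|]. destruct Hs as [<-|Hs]; auto.
    apply H; auto.
  - rewrite !in_app_iff in Hy; destruct H0, H2, H4; intuition.
  - rewrite !in_app_iff in Hy; destruct H0, H2, H4; intuition.
  - rewrite !in_app_iff in Hy; destruct H0, H2; intuition.
  - rewrite !in_app_iff in Hy; destruct H0, H2; intuition.
Qed.


Definition msubst_fm (f : nat -> tm) (A : fm) : fm := map_atoms (msubst_tm f) A.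

Lemma msubst_open_fm f k u A : (forall y, lcT (f y)) ->
  msubst_fm f (open_fm k u A) = open_fm k (msubst_tm f u) (msubst_fm f A).
Proof.
  intros Hf; unfold msubst_fm; revert k; induction A; intros k; simpl; f_equal; auto;
    try apply msubst_open; auto.
  rewrite !map_map; apply map_ext; intros; apply msubst_open; auto.
Qed.

Lemma msubst_open_nfm f k c A : (forall y, lcT (f y)) ->
  msubst_fm f (open_nfm k c A) = open_nfm k c (msubst_fm f A).
Proof.
  intros Hf; unfold msubst_fm; revert k; induction A; intros k; simpl; f_equal; auto;
    try apply msubst_open_n; auto.
  rewrite !map_map; apply map_ext; intros; apply msubst_open_n; auto.
Qed.

Lemma msubst_upd_fm f x t A : ~ In x (fv_fm A) -> msubst_fm (upd f x t) A = msubst_fm f A.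
Proof.
  unfold msubst_fm, fv_fm; induction A; simpl; intros Hn; rewrite ?in_app_iff in Hn;
    f_equal; try (apply msubst_upd; tauto); try (match goal with H: _ -> ?g |- ?g => apply H; tauto end).
  apply map_ext_in. intros s Hs. apply msubst_upd. intro; apply Hn.
  apply in_flat_map; eauto.
Qed.

Lemma msubst_fm_id A : msubst_fm (@tfv Sg) A = A.
Proof.
  unfold msubst_fm; induction A; simpl; f_equal; auto using msubst_id.
  apply map_id_Forall. apply Forall_forall; intros; apply msubst_id.
Qed.

Lemma map_atoms_atom (g : tm -> tm) A : is_atom A -> is_atom (map_atoms g A).
Proof. destruct A; simpl; auto. Qed.

Lemma atom_map_atoms (g : tm -> tm) A : is_atom (map_atoms g A) -> is_atom A.
Proof. destruct A; simpl; auto. Qed.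

Lemma syms_map (g : tm -> list nat) (h : tm -> tm) A :
  (forall t, incl (g t) (g (h t))) -> incl (syms_fm g A) (syms_fm g (map_atoms h A)).
Proof.
  intros Hg; induction A; simpl; try apply incl_app_app; auto using incl_refl.
  intros y Hy. apply in_flat_map in Hy as [s [Hs Hy]]. apply in_flat_map.
  exists (h s); split; [apply in_map; auto | apply Hg; auto].
Qed.

Lemma fresh_nat (L : list nat) : exists x, ~ In x L.
Proof.
  exists (S (list_max L)). intros H.
  assert (Forall (fun k => k <= list_max L) L) as HF by (apply list_max_le; auto).
  rewrite Forall_forall in HF. apply HF in H. lia.
Qed.

Lemma ctx_names_in c G : In c (ctx_names G) -> exists nu, In (CName c nu) G.
Proof.
  induction G as [|[y s|y s] G IH]; simpl; intros H; [contradiction| |].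
  - destruct (IH H) as [nu Hn]; eauto.
  - destruct H as [<-|H]; eauto. destruct (IH H) as [nu Hn]; eauto.
Qed.

Lemma Forall2_In_l_aux {A B} (R : A -> B -> Prop) x l l' : In x l -> Forall2 R l l' -> exists y, R x y.
Proof. intros Hi H; induction H; simpl in Hi; [contradiction|]. destruct Hi as [<-|Hi]; eauto. Qed.

Lemma wf_atom_syms G (A : fm) : is_atom A -> wf_fm G A ->
  incl (fv_fm A) (ctx_vars G) /\ incl (fn_fm A) (ctx_names G).
Proof.
  intros Ha Hw; destruct A; try contradiction; inversion Hw; subst; unfold fv_fm, fn_fm; simpl.
  - split; intros y Hy; apply in_flat_map in Hy as [s [Hs Hy]];
      destruct (Forall2_In_l_aux _ _ _ _ Hs H1) as [tau Ht]; apply has_ty_syms in Ht as [? ?]; auto.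
  - apply has_ty_syms in H2 as [? ?]; apply has_ty_syms in H3 as [? ?]; split; apply incl_app; auto.
  - apply has_ty_syms in H2 as [? ?]; apply has_ty_syms in H3 as [? ?]; split; apply incl_app; auto.
Qed.


Lemma Forall2_has_ty_msubst G1 G f ts tys :
  Forall2 (has_ty G1) ts tys ->
  (forall x tau, In (CVar x tau) G1 -> has_ty G (f x) tau) ->
  (forall c nu, In (CName c nu) G1 -> In (CName c nu) G) ->
  Forall2 (has_ty G) (map (msubst_tm f) ts) tys.
Proof. induction 1; simpl; constructor; eauto using has_ty_msubst. Qed.

Lemma wf_msubst_atom G1 G f (A : fm) : is_atom A -> wf_fm G1 A ->
  (forall x tau, In (CVar x tau) G1 -> has_ty G (f x) tau) ->
  (forall c nu, In (CName c nu) G1 -> In (CName c nu) G) ->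
  wf_fm G (msubst_fm f A).
Proof.
  intros Ha Hw Hv Hn; destruct A; try contradiction; inversion Hw; subst; simpl.
  - constructor. eapply Forall2_has_ty_msubst; eauto.
  - eapply wf_eq; eapply has_ty_msubst; eauto.
  - eapply wf_fresh; eapply has_ty_msubst; eauto.
Qed.

Lemma wf_atom_mono G1 G (A : fm) : is_atom A -> wf_fm G1 A -> incl G1 G -> wf_fm G A.
Proof.
  intros Ha Hw Hi. rewrite <- (msubst_fm_id A). eapply wf_msubst_atom; eauto.
  intros; constructor; auto.
Qed.

Lemma lc_tfv y : lcT (@tfv Sg y).
Proof. split; reflexivity. Qed.

Definition W G (A : fm) := exists G1 A0 f, wf_fm G1 A0 /\ A = msubst_fm f A0 /\
  (forall y, lcT (f y)) /\ (forall x tau, In (CVar x tau) G1 -> has_ty G (f x) tau) /\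
  (forall c nu, In (CName c nu) G1 -> In (CName c nu) G).

Lemma W_of_wf G A : wf_fm G A -> W G A.
Proof.
  intros H; exists G, A, (@tfv Sg); refine (conj H (conj _ (conj lc_tfv (conj _ _)))); auto.
  - rewrite msubst_fm_id; auto.
  - intros; constructor; auto.
Qed.

Lemma W_mono G G' A : W G A -> incl G G' -> W G' A.
Proof.
  intros (G1 & A0 & f & H1 & H2 & H3 & H4 & H5) Hi; exists G1, A0, f.
  refine (conj H1 (conj H2 (conj H3 (conj _ _)))); auto.
  intros; eapply has_ty_mono; eauto.
Qed.

Lemma W_atom G A : is_atom A -> W G A -> wf_fm G A.
Proof.
  intros Ha (G1 & A0 & f & H1 & -> & H3 & H4 & H5).
  apply atom_map_atoms in Ha. eapply wf_msubst_atom; eauto.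
Qed.

Ltac Winv H :=
  let G1 := fresh "G1" in let A0 := fresh "A0" in let f := fresh "f" in
  let H1 := fresh "H1" in let HA := fresh "HA" in let H3 := fresh "H3" in
  let H4 := fresh "H4" in let H5 := fresh "H5" in
  destruct H as (G1 & A0 & f & H1 & HA & H3 & H4 & H5);
  destruct A0; simpl in HA; try discriminate; injection HA; intros; subst;
  inversion H1; subst.

Lemma W_and G A B : W G (fAnd A B) -> W G A /\ W G B.
Proof. intros H; Winv H; split; eexists _, _, f; eauto 10. Qed.
Lemma W_or G A B : W G (fOr A B) -> W G A /\ W G B.
Proof. intros H; Winv H; split; eexists _, _, f; eauto 10. Qed.
Lemma W_imp G A B : W G (fImp A B) -> W G A /\ W G B.
Proof. intros H; Winv H; split; eexists _, _, f; eauto 10. Qed.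

Lemma W_quant G tau A0 t f G1 :
  (forall x, ~ In x (ctx_vars G1) -> wf_fm (CVar x tau :: G1) (open_fm 0 (tfv x) A0)) ->
  (forall y, lcT (f y)) -> (forall x tau, In (CVar x tau) G1 -> has_ty G (f x) tau) ->
  (forall c nu, In (CName c nu) G1 -> In (CName c nu) G) ->
  has_ty G t tau -> W G (open_fm 0 t (msubst_fm f A0)).
Proof.
  intros Hw H3 H4 H5 Ht.
  destruct (fresh_nat (ctx_vars G1 ++ fv_fm A0)) as [x Hx]. rewrite in_app_iff in Hx.
  exists (CVar x tau :: G1), (open_fm 0 (tfv x) A0), (upd f x t);
    split; [|split; [|split; [|split]]].
  - apply Hw; tauto.
  - assert (forall y, lcT (upd f x t y)) as Hl.
    { intros y; unfold upd; destruct (Nat.eqb y x); auto. eapply has_ty_lc; eauto. }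
    rewrite msubst_open_fm; auto. simpl. unfold upd at 1. rewrite Nat.eqb_refl.
    rewrite msubst_upd_fm; auto.
  - intros y; unfold upd; destruct (Nat.eqb y x); auto. eapply has_ty_lc; eauto.
  - intros y s [E|E].
    + injection E; intros; subst. unfold upd; rewrite Nat.eqb_refl; auto.
    + unfold upd. destruct (Nat.eqb_spec y x); subst; auto.
      exfalso; apply Hx; left; eapply in_ctx_vars; eauto.
  - intros c nu [E|E]; [discriminate|auto].
Qed.

Lemma W_all G tau A t : W G (fAll tau A) -> has_ty G t tau -> W G (open_fm 0 t A).
Proof. intros H Ht; Winv H. eapply W_quant; eauto. Qed.
Lemma W_ex G tau A t : W G (fEx tau A) -> has_ty G t tau -> W G (open_fm 0 t A).
Proof. intros H Ht; Winv H. eapply W_quant; eauto. Qed.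

Lemma W_new G nu A c : W G (fNew nu A) -> ~ In c (ctx_names G) ->
  W (CName c nu :: G) (open_nfm 0 c A).
Proof.
  intros H Hc; Winv H. change (map_atoms (msubst_tm f) A0) with (msubst_fm f A0).
  exists (CName c nu0 :: G1), (open_nfm 0 c A0), f;
    split; [|split; [|split; [|split]]]; auto.
  - apply H2. intros Hc1. apply ctx_names_in in Hc1 as [nu' Hn]. apply Hc.
    eapply in_ctx_names; eauto.
  - rewrite msubst_open_nfm; auto.
  - intros x s [E|E]; [discriminate|]. eapply has_ty_mono; eauto. intros e He; right; auto.
  - intros c' nu' [E|E]; [left; auto|right; auto].
Qed.


Lemma fresh_var_perm y G (Gam Del Gam2 Del2 : list fm) : fresh_var y G Gam Del ->
  Permutation Gam Gam2 -> Permutation Del Del2 -> fresh_var y G Gam2 Del2.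
Proof.
  intros [H1 H2] P1 P2; split; auto. intros A [H|H]; apply H2;
    [left|right]; eapply Permutation_in; [apply Permutation_sym| |apply Permutation_sym|]; eauto.
Qed.
Lemma fresh_name_perm y G (Gam Del Gam2 Del2 : list fm) : fresh_name y G Gam Del ->
  Permutation Gam Gam2 -> Permutation Del Del2 -> fresh_name y G Gam2 Del2.
Proof.
  intros [H1 H2] P1 P2; split; auto. intros A [H|H]; apply H2;
    [left|right]; eapply Permutation_in; [apply Permutation_sym| |apply Permutation_sym|]; eauto.
Qed.

Lemma der_perm G (Gam Del : list fm) n : der G Gam Del n ->
  forall Gam2 Del2, Permutation Gam Gam2 -> Permutation Del Del2 -> der G Gam2 Del2 n.
Proof.
  Local Ltac pt := eapply Permutation_trans; [apply Permutation_sym; eassumption|eassumption].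
  induction 1; intros Gam2 Del2 P1 P2.
  - eapply d_init; eauto using Permutation_in.
  - eapply d_topR; eauto using Permutation_in.
  - eapply d_botL; eauto using Permutation_in.
  - eapply d_andL; [pt|]. auto.
  - eapply d_andR; [pt| |]; auto.
  - eapply d_orL; [pt| |]; auto.
  - eapply d_orR; [pt|]; auto.
  - eapply d_impL; [pt| |]; auto.
  - eapply d_impR; [pt|]; auto.
  - eapply d_allL; [pt|eauto|]; auto.
  - eapply d_allR; [pt|eapply fresh_var_perm; eauto|]; auto.
  - eapply d_exL; [pt|eapply fresh_var_perm; eauto|]; auto.
  - eapply d_exR; [pt|eauto|]; auto.
  - eapply d_newR; [pt|eapply fresh_name_perm; eauto|]; auto.
  - eapply d_newL; [pt|eapply fresh_name_perm; eauto|]; auto.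
  - eapply d_eqR; eauto.
  - eapply d_eqS; [eauto|pt|]; auto.
  - eapply d_ax; [eauto|pt|]. intros Qs HQ; apply (H2 Qs HQ); auto. apply Permutation_app_head; auto.
  - eapply d_A3; eauto using fresh_var_perm.
  - eapply d_F; eauto using fresh_name_perm.
  - eapply d_bar; eauto.
Qed.

Section Swap.
Variables (sa sb : tm) (nu : nat).

Lemma wf_swap_atom G (P : fm) : has_ty G sa (TName nu) -> has_ty G sb (TName nu) ->
  is_atom P -> wf_fm G P -> wf_fm G (swap_fm sa sb P).
Proof.
  intros Ha Hb HP Hw; destruct P; try contradiction; inversion Hw; subst; simpl.
  - constructor. clear HP Hw. induction H1; simpl; constructor; eauto using ty_swap.
  - eapply wf_eq; eapply ty_swap; eauto.
  - eapply wf_fresh; eapply ty_swap; eauto.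
Qed.

Lemma E3_add G (Gam Del : list fm) n P : has_ty G sa (TName nu) -> has_ty G sb (TName nu) ->
  is_atom P -> wf_fm G P -> In P Gam -> der G (swap_fm sa sb P :: Gam) Del n -> der G Gam Del n.
Proof.
  intros Ha Hb HP Hw Hi Hd. apply in_split in Hi as (l1 & l2 & ->).
  eapply (@d_ax Sg G _ (l1 ++ l2) Del [P] [[swap_fm sa sb P]]).
  - eapply ax_E3; eauto.
  - simpl. apply Permutation_sym, Permutation_middle.
  - intros Qs [<-|[]]. exact Hd.
Qed.

Definition SS (t : tm) := tswap sa sb (tswap sa sb t).

Lemma S2_add G (Gam Del : list fm) n t tau : has_ty G sa (TName nu) -> has_ty G sb (TName nu) ->
  has_ty G t tau -> der G (fEq (SS t) t :: Gam) Del n -> der G Gam Del n.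
Proof.
  intros Ha Hb Ht Hd.
  eapply (@d_ax Sg G _ Gam Del [] [[fEq (SS t) t]]).
  - eapply ax_S2; eauto.
  - simpl. apply Permutation_refl.
  - intros Qs [<-|[]]. exact Hd.
Qed.

Lemma rw_list G (Del : list fm) n (mk : list tm -> fm) k :
  has_ty G sa (TName nu) -> has_ty G sb (TName nu) ->
  (forall l, length l = k -> is_atom (mk l)) ->
  (forall g l, length l = k -> map_atoms g (mk l) = mk (map g l)) ->
  forall rest done Gam, length done + length rest = k ->
  Forall (fun s => exists tau, has_ty G s tau) rest ->
  In (mk (done ++ map SS rest)) Gam -> In (mk (done ++ rest)) Del -> der G Gam Del n.
Proof.
  intros Ha Hb Hat Hmap rest. induction rest as [|s rest IH]; intros done Gam Hl Hf HG HD.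
  - simpl in *. rewrite app_nil_r in *. eapply d_init; eauto. apply Hat. lia.
  - inversion Hf as [|? ? [tau Ht] Hf']; subst.
    destruct (fresh_nat (flat_map (@fv_tm Sg) (done ++ map SS rest))) as [z Hz].
    set (Q := mk (done ++ tfv z :: map SS rest)).
    assert (HQ : forall v, map_atoms (subst_tm z v) Q = mk (done ++ v :: map SS rest)).
    { intros v. unfold Q. rewrite Hmap by (simpl in *; rewrite ?length_app, ?length_map; simpl; rewrite ?length_map; lia).
      f_equal. rewrite map_app. simpl. rewrite Nat.eqb_refl. f_equal.
      - apply map_id_Forall, Forall_forall. intros x Hx. apply subst_fresh.
        intro; apply Hz. rewrite flat_map_app. apply in_or_app; left. apply in_flat_map; eauto.
      - f_equal. apply map_id_Forall, Forall_forall. intros x Hx. apply subst_fresh.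
        intro; apply Hz. rewrite flat_map_app. apply in_or_app; right. apply in_flat_map; eauto. }
    apply (S2_add G Gam Del n s tau); auto.
    simpl in HG. apply in_split in HG as (l1 & l2 & HGe).
    apply (@d_eqS Sg G _ (l1 ++ l2) Del Q z (SS s) s n).
    + unfold Q. apply Hat. simpl in *. rewrite ?length_app, ?length_map; simpl; rewrite ?length_map; lia.
    + rewrite HQ, HGe. apply perm_skip. apply Permutation_sym, Permutation_middle.
    + rewrite HQ. apply (IH (done ++ [s])).
      * rewrite length_app; simpl in *; lia.
      * auto.
      * left. rewrite <- app_assoc. reflexivity.
      * rewrite <- app_assoc. exact HD.
Qed.

Lemma hard G (Gam Del : list fm) n psi : has_ty G sa (TName nu) -> has_ty G sb (TName nu) ->
  is_atom psi -> wf_fm G psi -> In (swap_fm sa sb psi) Gam -> In psi Del -> der G Gam Del n.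
Proof.
  intros Ha Hb HP Hw HG HD.
  apply (E3_add G Gam Del n (swap_fm sa sb psi)); [auto|auto|apply map_atoms_atom; auto|apply wf_swap_atom; auto|exact HG|].
  destruct psi; try contradiction; inversion Hw; subst.
  - apply (rw_list G Del n (fPred p) (length ts) Ha Hb) with (rest := ts) (done := []).
    + intros; simpl; auto.
    + intros; simpl; auto.
    + reflexivity.
    + clear -H1. induction H1; constructor; eauto.
    + left. unfold swap_fm; simpl. rewrite map_map. reflexivity.
    + exact HD.
  - set (mk := fun l : list tm => match l with [x; y] => fEq x y | _ => fTop end).
    apply (rw_list G Del n mk 2 Ha Hb) with (rest := [t; u]) (done := []).
    + intros [|x [|y [|]]]; simpl; intros; try discriminate; exact I.
    + intros g [|x [|y [|]]]; simpl; intros; try discriminate; reflexivity.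
    + reflexivity.
    + repeat constructor; eauto.
    + left. reflexivity.
    + exact HD.
  - set (mk := fun l : list tm => match l with [x; y] => fFresh x y | _ => fTop end).
    apply (rw_list G Del n mk 2 Ha Hb) with (rest := [a; t]) (done := []).
    + intros [|x [|y [|]]]; simpl; intros; try discriminate; exact I.
    + intros g [|x [|y [|]]]; simpl; intros; try discriminate; reflexivity.
    + reflexivity.
    + repeat constructor; eauto.
    + left. reflexivity.
    + exact HD.
Qed.


Definition R G (X Y : fm) := X = Y \/ exists psi, W G psi /\ X = swap_fm sa sb psi /\ Y = psi.
Definition Ex G (X : fm) := is_atom X /\ wf_fm G X.
Definition Rel G (Ls Lt : list fm) := exists core ex,
  Forall2 (R G) Ls core /\ Permutation Lt (core ++ ex) /\ Forall (Ex G) ex.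

Lemma R_refl G X : R G X X.
Proof. left; auto. Qed.
Lemma R_sw G psi : W G psi -> R G (swap_fm sa sb psi) psi.
Proof. intros; right; eauto. Qed.

Lemma Rel_self G L : Rel G L L.
Proof.
  exists L, []; rewrite app_nil_r; split; [|split; auto].
  induction L; constructor; auto using R_refl.
Qed.

Lemma Rel_perm_src G Ls Ls' Lt : Permutation Ls Ls' -> Rel G Ls Lt -> Rel G Ls' Lt.
Proof.
  intros Hp (core & ex & HF & Hp2 & HE).
  destruct (Permutation_Forall2 Hp HF) as (core' & Pc & HF').
  exists core', ex; split; auto; split; auto.
  eapply Permutation_trans; [eauto|]. apply Permutation_app_tail; auto.
Qed.

Lemma Rel_perm_tgt G Ls Lt Lt' : Permutation Lt Lt' -> Rel G Ls Lt -> Rel G Ls Lt'.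
Proof.
  intros Hp (core & ex & HF & Hp2 & HE). exists core, ex; split; auto; split; auto.
  eapply Permutation_trans; [apply Permutation_sym|]; eauto.
Qed.

Lemma Rel_cons G X Y Ls Lt : R G X Y -> Rel G Ls Lt -> Rel G (X :: Ls) (Y :: Lt).
Proof.
  intros HR (core & ex & HF & Hp2 & HE). exists (Y :: core), ex; split; auto; split; auto.
  simpl; apply perm_skip; auto.
Qed.

Lemma Rel_app_self G L Ls Lt : Rel G Ls Lt -> Rel G (L ++ Ls) (L ++ Lt).
Proof. induction L; simpl; auto. intros; apply Rel_cons; auto using R_refl. Qed.

Lemma Rel_ex G Z Ls Lt : Ex G Z -> Rel G Ls Lt -> Rel G Ls (Z :: Lt).
Proof.
  intros HZ (core & ex & HF & Hp2 & HE). exists core, (Z :: ex); split; auto; split; auto.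
  eapply Permutation_trans; [apply perm_skip; eauto|]. apply Permutation_middle.
Qed.

Lemma Rel_split G X Ls Lt : Rel G (X :: Ls) Lt ->
  exists Y Lt', R G X Y /\ Permutation Lt (Y :: Lt') /\ Rel G Ls Lt'.
Proof.
  intros (core & ex & HF & Hp2 & HE). inversion HF as [|? Y ? core' HR HF']; subst.
  exists Y, (core' ++ ex); split; auto; split; auto.
  exists core', ex; split; auto; split; auto.
Qed.

Lemma Rel_in G X Ls Lt : Rel G Ls Lt -> In X Ls -> exists Y, R G X Y /\ In Y Lt.
Proof.
  intros HR Hi. apply in_split in Hi as (l1 & l2 & ->).
  apply (Rel_perm_src G _ (X :: l1 ++ l2)) in HR; [|apply Permutation_sym, Permutation_middle].
  apply Rel_split in HR as (Y & Lt' & HR & Hp & _). exists Y; split; auto.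
  eapply Permutation_in; [apply Permutation_sym; eauto|left; auto].
Qed.

Lemma Rel_mono G G' Ls Lt : Rel G Ls Lt -> incl G G' -> Rel G' Ls Lt.
Proof.
  intros (core & ex & HF & Hp2 & HE) Hi. exists core, ex; split; [|split; auto].
  - eapply Forall2_impl; [|eauto]. intros X Y [HR|(psi & HW & E1 & E2)]; [left; auto|right].
    exists psi; split; auto. eapply W_mono; eauto.
  - eapply Forall_impl; [|eauto]. intros X [H1 H2]; split; auto. eapply wf_atom_mono; eauto.
Qed.

Lemma incl_cons_tl {A} (x : A) l : incl l (x :: l).
Proof. intros y Hy; right; auto. Qed.

Lemma R_syms G X Y : R G X Y -> incl (fv_fm Y) (fv_fm X) /\ incl (fn_fm Y) (fn_fm X).
Proof.
  intros [<-|(psi & _ & -> & ->)]; [split; apply incl_refl|].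
  split; apply syms_map; intros t y Hy; simpl; rewrite !in_app_iff; auto.
Qed.

Lemma Forall2_in_r {A B} (P : A -> B -> Prop) l l' y : Forall2 P l l' -> In y l' ->
  exists x, In x l /\ P x y.
Proof. induction 1; simpl; intros Hi; [contradiction|]. destruct Hi as [<-|Hi]; eauto.
  destruct (IHForall2 Hi) as (x' & ? & ?); eauto. Qed.

Lemma Rel_member G Ls Lt Z : Rel G Ls Lt -> In Z Lt -> (exists X, In X Ls /\ R G X Z) \/ Ex G Z.
Proof.
  intros (core & ex & HF & Hp2 & HE) Hi. eapply Permutation_in in Hi; [|eauto].
  apply in_app_iff in Hi as [Hi|Hi].
  - left. eapply Forall2_in_r; eauto.
  - right. rewrite Forall_forall in HE; auto.
Qed.

Lemma Rel_fresh_var y G Ls Ds Lt Dt : fresh_var y G Ls Ds -> Rel G Ls Lt -> Rel G Ds Dt ->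
  fresh_var y G Lt Dt.
Proof.
  intros [H1 H2] RL RD; split; auto. intros Z HZ Hy.
  destruct HZ as [HZ|HZ]; [destruct (Rel_member _ _ _ _ RL HZ) as [(X & HX & HR)|[Ha Hw]]
    |destruct (Rel_member _ _ _ _ RD HZ) as [(X & HX & HR)|[Ha Hw]]].
  - apply (H2 X); auto. apply (proj1 (R_syms _ _ _ HR)); auto.
  - apply H1. apply (proj1 (wf_atom_syms _ _ Ha Hw)); auto.
  - apply (H2 X); auto. apply (proj1 (R_syms _ _ _ HR)); auto.
  - apply H1. apply (proj1 (wf_atom_syms _ _ Ha Hw)); auto.
Qed.

Lemma Rel_fresh_name y G Ls Ds Lt Dt : fresh_name y G Ls Ds -> Rel G Ls Lt -> Rel G Ds Dt ->
  fresh_name y G Lt Dt.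
Proof.
  intros [H1 H2] RL RD; split; auto. intros Z HZ Hy.
  destruct HZ as [HZ|HZ]; [destruct (Rel_member _ _ _ _ RL HZ) as [(X & HX & HR)|[Ha Hw]]
    |destruct (Rel_member _ _ _ _ RD HZ) as [(X & HX & HR)|[Ha Hw]]].
  - apply (H2 X); auto. apply (proj2 (R_syms _ _ _ HR)); auto.
  - apply H1. apply (proj2 (wf_atom_syms _ _ Ha Hw)); auto.
  - apply (H2 X); auto. apply (proj2 (R_syms _ _ _ HR)); auto.
  - apply H1. apply (proj2 (wf_atom_syms _ _ Ha Hw)); auto.
Qed.

Lemma boost1 G X Ls Lt : has_ty G sa (TName nu) -> has_ty G sb (TName nu) ->
  is_atom X -> Rel G (X :: Ls) Lt ->
  exists Lt2 Lt2', Permutation Lt2 (X :: Lt2') /\ Rel G Ls Lt2' /\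
    forall Extra Del n, der G (Extra ++ Lt2) Del n -> der G (Extra ++ Lt) Del n.
Proof.
  intros Ha Hb HX HR. apply Rel_split in HR as (Y & Lt' & [<-|(psi & HW & -> & ->)] & Hp & Hr).
  - exists Lt, Lt'; split; auto.
  - exists (swap_fm sa sb psi :: Lt), Lt; split; [apply Permutation_refl|split].
    + apply (Rel_perm_tgt _ _ (psi :: Lt')); [apply Permutation_sym; auto|].
      apply Rel_ex; auto. apply atom_map_atoms in HX. split; auto. apply W_atom; auto.
    + intros Extra Del n Hd. apply atom_map_atoms in HX.
      apply (E3_add G _ Del n psi); auto.
      * apply W_atom; auto.
      * apply in_or_app; right. eapply Permutation_in; [apply Permutation_sym; eauto|left; auto].
      * eapply der_perm; [eauto| |apply Permutation_refl]. apply Permutation_sym, Permutation_middle.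
Qed.

Lemma boostN G Ps Ls Lt : has_ty G sa (TName nu) -> has_ty G sb (TName nu) ->
  Forall (@is_atom Sg) Ps -> Rel G (Ps ++ Ls) Lt ->
  exists Lt2 Lt2', Permutation Lt2 (Ps ++ Lt2') /\ Rel G Ls Lt2' /\
    forall Extra Del n, der G (Extra ++ Lt2) Del n -> der G (Extra ++ Lt) Del n.
Proof.
  intros Ha Hb HF. revert Ls Lt. induction HF as [|X Ps HX HF IH]; intros Ls Lt HR.
  - exists Lt, Lt; simpl; split; auto.
  - simpl in HR. destruct (boost1 G X (Ps ++ Ls) Lt Ha Hb HX HR) as (Lt2 & Lt2' & Hp & Hr & Ht).
    destruct (IH _ _ Hr) as (Lt3 & Lt3' & Hp3 & Hr3 & Ht3).
    exists (X :: Lt3), Lt3'; split; [simpl; apply perm_skip; auto|split; auto].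
    intros Extra Del n Hd. apply Ht.
    eapply der_perm; [| |apply Permutation_refl].
    + apply (Ht3 (Extra ++ [X])). rewrite <- app_assoc. exact Hd.
    + rewrite <- app_assoc. apply Permutation_app_head. simpl. apply Permutation_sym; auto.
Qed.


Lemma open_swap k u A : lcT sa -> lcT sb ->
  open_fm k u (swap_fm sa sb A) = swap_fm sa sb (open_fm k u A).
Proof.
  intros [Ha _] [Hb _]; unfold swap_fm; revert k; induction A; intros k; simpl; f_equal; auto;
    try (rewrite Ha, Hb; auto).
  rewrite !map_map; apply map_ext; intros; simpl; rewrite Ha, Hb; auto.
Qed.

Lemma open_n_swap k c A : lcT sa -> lcT sb ->
  open_nfm k c (swap_fm sa sb A) = swap_fm sa sb (open_nfm k c A).
Proof.
  intros [_ Ha] [_ Hb]; unfold swap_fm; revert k; induction A; intros k; simpl; f_equal; auto;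
    try (rewrite Ha, Hb; auto).
  rewrite !map_map; apply map_ext; intros; simpl; rewrite Ha, Hb; auto.
Qed.

Lemma ax_atoms G Ps Qss : ax_instance G Ps Qss -> Forall (@is_atom Sg) Ps.
Proof. destruct 1; repeat constructor; auto. Qed.


Lemma swap_eq X : map_atoms (tswap sa sb) X = swap_fm sa sb X.
Proof. reflexivity. Qed.

Ltac Rcase HR :=
  let psi := fresh "psi" in let HW := fresh "HW" in let E := fresh "E" in
  destruct HR as [<-|(psi & HW & E & ->)];
  [| unfold swap_fm in E; destruct psi; simpl in E; try discriminate; try (injection E; intros; subst); rewrite ?swap_eq in *].

Ltac split_rel R Hp :=
  let Y := fresh "Y" in let L' := fresh "L'" in let HR := fresh "HR" in
  let Hq := fresh "Hq" in let Hr := fresh "Hr" in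
  apply (Rel_perm_src _ _ _ _ Hp) in R; apply Rel_split in R as (Y & L' & HR & Hq & Hr).

Lemma main_lemma : forall G Gs Ds n, der G Gs Ds n ->
  has_ty G sa (TName nu) -> has_ty G sb (TName nu) ->
  forall Gt Dt, Rel G Gs Gt -> Rel G Ds Dt -> der G Gt Dt n.
Proof.
  intros G Gs Ds n H.
  induction H as
  [ G Gam Del P n HP HG HD
  | G Gam Del n HT
  | G Gam Del n HB
  | G Gam Gam' Del A B n Hp Hd IH
  | G Gam Del Del' A B n Hp Hd1 IH1 Hd2 IH2
  | G Gam Gam' Del A B n Hp Hd1 IH1 Hd2 IH2
  | G Gam Del Del' A B n Hp Hd IH
  | G Gam Gam' Del A B n Hp Hd1 IH1 Hd2 IH2
  | G Gam Del Del' A B n Hp Hd IH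
  | G Gam Gam' Del tau A t n Hp Ht Hd IH
  | G Gam Del Del' tau A y n Hp Hf Hd IH
  | G Gam Gam' Del tau A y n Hp Hf Hd IH
  | G Gam Del Del' tau A t n Hp Ht Hd IH
  | G Gam Del Del' nu' A c n Hp Hf Hd IH
  | G Gam Gam' Del nu' A c n Hp Hf Hd IH
  | G Gam Del t tau n Ht Hd IH
  | G Gam Gam' Del Q z t u n HQ Hp Hd IH
  | G Gam Gam' Del Ps Qss n Hax Hp Hd IH
  | G Gam Del t nu' sigma c x n Ht Hne Hfa Hfx Hd IH
  | G Gam Del c nu' n Hf Hd IH
  | G Gam Del P n Hbar Hd IH ];
  intros Ha Hb Gt Dt RG RD.
  -
    apply in_split in HG as (l1 & l2 & ->).
    apply (Rel_perm_src _ _ (P :: l1 ++ l2)) in RG; [|apply Permutation_sym, Permutation_middle].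
    destruct (boostN G [P] _ _ Ha Hb (Forall_cons _ HP (Forall_nil _)) RG) as (Lt2 & Lt2' & Hp & Hr & Htr).
    apply (Htr []). simpl.
    assert (In P Lt2) as HP2 by (eapply Permutation_in; [apply Permutation_sym; eauto|left; auto]).
    destruct (Rel_in _ _ _ _ RD HD) as (Y & [<-|(psi & HW & -> & ->)] & HY).
    + eapply d_init; eauto.
    + apply atom_map_atoms in HP. eapply hard; eauto. apply W_atom; auto.
  - destruct (Rel_in _ _ _ _ RD HT) as (Y & HR & HY). Rcase HR; eapply d_topR; eauto.
  - destruct (Rel_in _ _ _ _ RG HB) as (Y & HR & HY). Rcase HR; eapply d_botL; eauto.
  -
    split_rel RG Hp. Rcase HR.
    + eapply d_andL; [eauto|]. apply IH; auto. repeat apply Rel_cons; auto using R_refl.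
    + apply W_and in HW as [HW1 HW2].
      eapply d_andL; [eauto|]. apply IH; auto. repeat apply Rel_cons; auto using R_sw.
  -
    split_rel RD Hp. Rcase HR.
    + eapply d_andR; [eauto| |]; [apply IH1|apply IH2]; auto; apply Rel_cons; auto using R_refl.
    + apply W_and in HW as [HW1 HW2].
      eapply d_andR; [eauto| |]; [apply IH1|apply IH2]; auto; apply Rel_cons; auto using R_sw.
  -
    split_rel RG Hp. Rcase HR.
    + eapply d_orL; [eauto| |]; [apply IH1|apply IH2]; auto; apply Rel_cons; auto using R_refl.
    + apply W_or in HW as [HW1 HW2].
      eapply d_orL; [eauto| |]; [apply IH1|apply IH2]; auto; apply Rel_cons; auto using R_sw.
  -
    split_rel RD Hp. Rcase HR.
    + eapply d_orR; [eauto|]. apply IH; auto. repeat apply Rel_cons; auto using R_refl.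
    + apply W_or in HW as [HW1 HW2].
      eapply d_orR; [eauto|]. apply IH; auto. repeat apply Rel_cons; auto using R_sw.
  -
    split_rel RG Hp. Rcase HR.
    + eapply d_impL; [eauto| |]; [apply IH1|apply IH2]; auto; apply Rel_cons; auto using R_refl.
    + apply W_imp in HW as [HW1 HW2].
      eapply d_impL; [eauto| |]; [apply IH1|apply IH2]; auto; apply Rel_cons; auto using R_sw.
  -
    split_rel RD Hp. Rcase HR.
    + eapply d_impR; [eauto|]. apply IH; auto; apply Rel_cons; auto using R_refl.
    + apply W_imp in HW as [HW1 HW2].
      eapply d_impR; [eauto|]. apply IH; auto; apply Rel_cons; auto using R_sw.
  -
    pose proof RG as RG0. split_rel RG Hp. Rcase HR.
    + eapply d_allL; [eauto|eauto|]. apply IH; auto. repeat apply Rel_cons; auto using R_refl.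
    + eapply d_allL; [eauto|eauto|]. apply IH; auto. apply Rel_cons.
      * rewrite (open_swap _ _ psi) by (eapply has_ty_lc; eauto). apply R_sw. eapply W_all; eauto.
      * apply Rel_cons; auto. apply (R_sw _ (fAll _ psi)); auto.
  -
    pose proof (Rel_fresh_var _ _ _ _ _ _ Hf RG RD) as Hf'.
    split_rel RD Hp. Rcase HR.
    + eapply d_allR; [eauto|eauto|]. apply IH; eauto using has_ty_mono, incl_cons_tl.
      * eapply Rel_mono; eauto using incl_cons_tl.
      * apply Rel_cons; auto using R_refl. eapply Rel_mono; eauto using incl_cons_tl.
    + eapply d_allR; [eauto|eauto|]. apply IH; eauto using has_ty_mono, incl_cons_tl.
      * eapply Rel_mono; eauto using incl_cons_tl.
      * apply Rel_cons; [|eapply Rel_mono; eauto using incl_cons_tl].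
        rewrite (open_swap _ _ psi) by (eapply has_ty_lc; eauto). apply R_sw.
        eapply W_all; [eapply W_mono; eauto using incl_cons_tl|]. apply ty_var; left; auto.
  -
    pose proof (Rel_fresh_var _ _ _ _ _ _ Hf RG RD) as Hf'.
    split_rel RG Hp. Rcase HR.
    + eapply d_exL; [eauto|eauto|]. apply IH; eauto using has_ty_mono, incl_cons_tl.
      * apply Rel_cons; auto using R_refl. eapply Rel_mono; eauto using incl_cons_tl.
      * eapply Rel_mono; eauto using incl_cons_tl.
    + eapply d_exL; [eauto|eauto|]. apply IH; eauto using has_ty_mono, incl_cons_tl.
      * apply Rel_cons; [|eapply Rel_mono; eauto using incl_cons_tl].
        rewrite (open_swap _ _ psi) by (eapply has_ty_lc; eauto). apply R_sw.
        eapply W_ex; [eapply W_mono; eauto using incl_cons_tl|]. apply ty_var; left; auto.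
      * eapply Rel_mono; eauto using incl_cons_tl.
  -
    split_rel RD Hp. Rcase HR.
    + eapply d_exR; [eauto|eauto|]. apply IH; auto. repeat apply Rel_cons; auto using R_refl.
    + eapply d_exR; [eauto|eauto|]. apply IH; auto. apply Rel_cons.
      * rewrite (open_swap _ _ psi) by (eapply has_ty_lc; eauto). apply R_sw. eapply W_ex; eauto.
      * apply Rel_cons; auto. apply (R_sw _ (fEx _ psi)); auto.
  -
    pose proof (Rel_fresh_name _ _ _ _ _ _ Hf RG RD) as Hf'.
    split_rel RD Hp. Rcase HR.
    + eapply d_newR; [eauto|eauto|]. apply IH; eauto using has_ty_mono, incl_cons_tl.
      * eapply Rel_mono; eauto using incl_cons_tl.
      * apply Rel_cons; auto using R_refl. eapply Rel_mono; eauto using incl_cons_tl.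
    + eapply d_newR; [eauto|eauto|]. apply IH; eauto using has_ty_mono, incl_cons_tl.
      * eapply Rel_mono; eauto using incl_cons_tl.
      * apply Rel_cons; [|eapply Rel_mono; eauto using incl_cons_tl].
        rewrite (open_n_swap _ _ psi) by (eapply has_ty_lc; eauto). apply R_sw.
        apply W_new; auto. apply Hf.
  -
    pose proof (Rel_fresh_name _ _ _ _ _ _ Hf RG RD) as Hf'.
    split_rel RG Hp. Rcase HR.
    + eapply d_newL; [eauto|eauto|]. apply IH; eauto using has_ty_mono, incl_cons_tl.
      * apply Rel_cons; auto using R_refl. eapply Rel_mono; eauto using incl_cons_tl.
      * eapply Rel_mono; eauto using incl_cons_tl.
    + eapply d_newL; [eauto|eauto|]. apply IH; eauto using has_ty_mono, incl_cons_tl.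
      * apply Rel_cons; [|eapply Rel_mono; eauto using incl_cons_tl].
        rewrite (open_n_swap _ _ psi) by (eapply has_ty_lc; eauto). apply R_sw.
        apply W_new; auto. apply Hf.
      * eapply Rel_mono; eauto using incl_cons_tl.
  -
    eapply d_eqR; [exact Ht|]. apply IH; auto. apply Rel_cons; auto using R_refl.
  -
    set (Ps := [fEq t u; map_atoms (subst_tm z t) Q]).
    apply (Rel_perm_src _ _ (Ps ++ Gam')) in RG; [|exact Hp].
    assert (Forall (@is_atom Sg) Ps) as HPs.
    { repeat constructor. apply map_atoms_atom; auto. }
    destruct (boostN G Ps _ _ Ha Hb HPs RG) as (Lt2 & Lt2' & Hp2 & Hr & Htr).
    apply (Htr []). simpl.
    eapply d_eqS; [exact HQ|exact Hp2|]. apply IH; auto. apply Rel_cons; auto using R_refl.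
    apply (Rel_perm_src _ (Ps ++ Gam')); [apply Permutation_sym; auto|].
    apply (Rel_perm_tgt _ _ (Ps ++ Lt2')); [apply Permutation_sym; auto|].
    apply Rel_app_self; auto.
  -
    apply (Rel_perm_src _ _ (Ps ++ Gam')) in RG; [|exact Hp].
    destruct (boostN G Ps _ _ Ha Hb (ax_atoms _ _ _ Hax) RG) as (Lt2 & Lt2' & Hp2 & Hr & Htr).
    apply (Htr []). simpl.
    eapply d_ax; [exact Hax|exact Hp2|]. intros Qs HQs. apply (IH Qs HQs); auto.
    apply Rel_app_self.
    apply (Rel_perm_src _ (Ps ++ Gam')); [apply Permutation_sym; auto|].
    apply (Rel_perm_tgt _ _ (Ps ++ Lt2')); [apply Permutation_sym; auto|].
    apply Rel_app_self; auto.
  -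
    assert (incl G (CVar x sigma :: CVar c (TName nu') :: G)) as Hi.
    { intros e He; right; right; auto. }
    eapply d_A3; eauto using Rel_fresh_var.
    apply IH; eauto using has_ty_mono.
    + apply Rel_cons; auto using R_refl. eapply Rel_mono; eauto.
    + eapply Rel_mono; eauto.
  -
    eapply d_F; eauto using Rel_fresh_name.
    apply IH; eauto using has_ty_mono, incl_cons_tl, Rel_mono.
  -
    eapply d_bar; eauto. apply IH; auto. apply Rel_cons; auto using R_refl.
Qed.

End Swap.
End Terms.

Theorem mainTheorem17 (S : signature) (G : ctx) (phi : fm S) (a b : tm S) (nu : nat)
  (Gam Del : list (fm S)) (n : nat) :
  ctx_ok G -> wf_fm G phi -> has_ty G a (TName nu) -> has_ty G b (TName nu) ->
  (der G (swap_fm a b phi :: Gam) Del n -> der G (phi :: Gam) Del n) /\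
  (der G Gam (swap_fm a b phi :: Del) n -> der G Gam (phi :: Del) n).
Proof.
  intros _ Hw Ha Hb. split; intros Hd.
  - eapply (main_lemma S a b nu); eauto.
    + apply Rel_cons; [apply R_sw, W_of_wf; auto|apply Rel_self].
    + apply Rel_self.
  - eapply (main_lemma S a b nu); eauto.
    + apply Rel_self.
    + apply Rel_cons; [apply R_sw, W_of_wf; auto|apply Rel_self].
Qed.
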